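(* Let $n\geq 5$. Let $S_n^+$ be any graph obtained from the star $S_n$ on $n$ vertices by adding one new edge (joining two leaves), and let $S_n^{++}$ be any graph obtained from $S_n^+$ by adding one further new edge (joining two nonadjacent vertices of $S_n^+$). Then $px_k(S_n^{++})\leq n-3$ for each integer $k$ with $3\leq k\leq n$.
   Context: All graphs are finite, simple, undirected and connected. An edge-coloring of a graph assigns a color to each edge (adjacent edges may receive the same color). A tree in an edge-colored graph is proper if any two adjacent edges of the tree receive different colors. For $S\subseteq V(G)$, an $S$-tree is a subgraph of $G$ that is a tree containing all vertices of $S$. For a connected graph $G$ of order $n$ and an integer $k$ with $2\le k\le n$, an edge-coloring of $G$ is a $k$-proper coloring if for every set $S$ of $k$ vertices of $G$ there exists a proper $S$-tree in $G$. The $k$-proper index $px_k(G)$ is the minimum number of colors used in a $k$-proper coloring of $G$. The star $S_n$ is the tree $K_{1,n-1}$ on $n$ vertices. *)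

(* Defs.v *)
From mathcomp Require Import all_boot.
Set Implicit Arguments. Unset Strict Implicit. Unset Printing Implicit Defensive.

(* A simple graph on a finite type T is a symmetric irreflexive relation e. *)

Definition is_tree_in (T : finType) (e : rel T) (V : {set T}) (t : rel T) : Prop :=
  (forall u v, t u v -> e u v) /\
  (forall u v, t u v -> t v u) /\
  (forall u v, t u v -> u \in V /\ v \in V) /\
  (exists v, v \in V) /\
  (forall u v, u \in V -> v \in V -> connect t u v) /\
  (forall s : seq T, uniq s -> 3 <= size s -> ~~ cycle t s).

Definition is_S_tree (T : finType) (e : rel T) (S V : {set T}) (t : rel T) : Prop :=
  is_tree_in e V t /\ S \subset V.

Definition edge_coloring (T : finType) (C : Type) (e : rel T) (col : T -> T -> C) : Prop :=
  forall u v, e u v -> col u v = col v u.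

Definition proper_tree (T : finType) (C : eqType) (t : rel T) (col : T -> T -> C) : Prop :=
  forall u v w, t u v -> t u w -> v != w -> col u v != col u w.

Definition k_proper_coloring (T : finType) (C : eqType) (e : rel T) (k : nat)
    (col : T -> T -> C) : Prop :=
  edge_coloring e col /\
  forall S : {set T}, #|S| = k ->
    exists (V : {set T}) (t : rel T), is_S_tree e S V t /\ proper_tree t col.

(* px_k(G) <= m : there is a k-proper coloring using at most m colors
   (colors taken from 'I_m). *)
Definition px_le (T : finType) (e : rel T) (k m : nat) : Prop :=
  exists col : T -> T -> 'I_m, k_proper_coloring e k col.

Definition star (n : nat) (c : 'I_n) : rel 'I_n :=
  fun u v => (u != v) && ((u == c) || (v == c)).

Definition add_edge (T : finType) (e : rel T) (a b : T) : rel T :=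
  fun u v => e u v || ((u != v) && ([set u; v] == [set a; b])).

(* Main.v *)
Require Import Defs.
From mathcomp Require Import all_boot.

Lemma seq_max (T : eqType) (f : T -> nat) (s : seq T) :
  0 < size s -> exists2 m, m \in s & forall z, z \in s -> f z <= f m.
Proof.
elim: s => [//|y s IH] _.
case: s IH => [_|y' s' IH].
  by exists y; rewrite ?inE // => z; rewrite inE => /eqP->.
have [m ms mmax] := IH isT.
case: (leqP (f y) (f m)) => h.
  exists m; first by rewrite inE ms orbT.
  by move=> z; rewrite inE => /orP[/eqP->//|/mmax].
exists y; first by rewrite inE eqxx.
move=> z; rewrite inE => /orP[/eqP->//|/mmax/leq_trans]; apply; exact: ltnW.
Qed.

Lemma gen (T : finType) (e : rel T) (m k : nat) (c : T) (p : T -> T)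
  (d : T -> nat) (g : T -> 'I_m) :
  (forall u v, e u v -> e v u) ->
  (forall u, u != c -> e u (p u)) ->
  (forall u, u != c -> d u = (d (p u)).+1) ->
  (forall u v, u != c -> v != c -> p u = p v -> u != v -> g u != g v) ->
  (forall u, u != c -> p u != c -> g u != g (p u)) ->
  px_le e k m.
Proof.
move=> esym hp hd hsib hpar.
pose t := fun u v => ((u != c) && (v == p u)) || ((v != c) && (u == p v)).
pose col := fun u v => if (u != c) && (v == p u) then g u
   else if (v != c) && (u == p v) then g v else g c.
have nboth: forall u v, u != c -> v != c -> v = p u -> u = p v -> False.
  move=> u v uc vc vp up; have h1 := hd u uc; have h2 := hd v vc.
  rewrite -vp in h1; rewrite -up h1 in h2.
  by move: h2 => /eqP; rewrite -addn2 -{1}(addn0 (d v)) eqn_add2l.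
exists col; split.
  move=> u v _; rewrite /col.
  case: (boolP ((u != c) && (v == p u))) => [/andP[uc /eqP vp]|h1];
  case: (boolP ((v != c) && (u == p v))) => [/andP[vc /eqP up]|h2] //.
  by case: (nboth u v).
move=> S _; exists setT, t; split; last first.
  move=> u v w tuv tuw vw; rewrite /col.
  have key: forall z, t u z -> ((u != c) && (z == p u)) \/
       ((z != c) && (u == p z)) /\ ~~ ((u != c) && (z == p u)).
    move=> z; case/orP => [->|/andP[zc up]]; first by left.
    right; rewrite zc up; split => //; apply/negP => /andP[uc /eqP zp].
    by apply: (nboth u z) => //; apply/eqP.
  case: (key v tuv) => [hv|[hv nv]]; case: (key w tuw) => [hw|[hw nw]].
  - by case/andP: hv => _ /eqP vp; case/andP: hw => _ /eqP wp; rewrite vp wp eqxx in vw.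
  - rewrite hv (negbTE nw) hw; case/andP: hw => wc /eqP up; case/andP: hv => uc _.
    by rewrite up eq_sym; apply: hpar => //; rewrite -up.
  - rewrite hw (negbTE nv) hv; case/andP: hv => vc /eqP up; case/andP: hw => uc _.
    by rewrite up; apply: hpar => //; rewrite -up.
  - rewrite (negbTE nv) (negbTE nw) hv hw.
    case/andP: hv => vc /eqP up; case/andP: hw => wc /eqP up'.
    by apply: hsib => //; rewrite -up -up'.
split; last exact: subsetT.
have tsym: forall u v, t u v -> t v u.
  by move=> u v H; rewrite /t orbC.
have conc: forall u, connect t u c.
  move=> u; move: {2}(d u) (leqnn (d u)) => N; elim: N u => [|N IH] u.
    case: (eqVneq u c) => [->|uc]; first by move=> _; exact: connect0.
    by rewrite hd.
  case: (eqVneq u c) => [->|uc]; first by move=> _; exact: connect0.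
  rewrite hd // ltnS => h; apply: connect_trans (IH _ h).
  by apply: connect1; rewrite /t uc eqxx.
split.
  move=> u v; case/orP => [/andP[uc /eqP->]|/andP[vc /eqP->]]; first exact: hp.
  by apply: esym; apply: hp.
split; first exact: tsym.
split; first by move=> *; rewrite !in_setT.
split; first by exists c; rewrite in_setT.
split.
  move=> u v _ _; apply: connect_trans (conc u) _.
  have ts: symmetric t by move=> x y; apply/idP/idP; apply: tsym.
  by rewrite (sym_connect_sym ts); exact: conc.
move=> s us ss; apply/negP => cs.
have [mx mxs mxmax] := @seq_max _ d s (ltn_trans (isT : 0 < 2) ss).
case: (rot_to mxs) => i s' Hrot.
move: cs us ss; rewrite -(rot_cycle i) -(rot_uniq i) -(size_rot i) Hrot.
have mx2: forall z, z \in mx :: s' -> d z <= d mx.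
  by move=> z; rewrite -Hrot mem_rot; apply mxmax.
case: s' mx2 {Hrot} => [//|u s''] mx2.
case/lastP: s'' mx2 => [//|q w] mx2.
rewrite /= rcons_path last_rcons => /andP[tmu /andP[_ twm]].
move=> /andP[_ /andP[unin _]] _.
have par: forall v, v \in mx :: u :: rcons q w -> t mx v -> v = p mx.
  move=> v vin; case/orP => [/andP[_ /eqP->]//| /andP[vc /eqP mxp]].
  by have := mx2 v vin; rewrite (hd v vc) -mxp ltnn.
have eu : u = p mx by apply: par tmu; rewrite !inE eqxx orbT.
have ew : w = p mx by apply: par (tsym _ _ twm); rewrite !inE mem_rcons inE eqxx !orbT.
by move: unin; rewrite mem_rcons inE eu -ew eqxx.
Qed.

Definition flip {m} (i : 'I_m.+2) : 'I_m.+2 := if i == ord0 then ord_max else ord0.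

Lemma flip_neq m (i : 'I_m.+2) : flip i != i.
Proof. rewrite /flip; case: (eqVneq i ord0) => [->|h] //; by rewrite eq_sym. Qed.

Lemma rank_ex m (c f1 f2 x0 : 'I_m.+4.+1) : c != f1 -> c != f2 -> f1 != f2 ->
  x0 != c -> x0 != f1 -> x0 != f2 ->
  exists rk : 'I_m.+4.+1 -> 'I_m.+2, forall u v, u != c -> u != f1 -> u != f2 ->
     v != c -> v != f1 -> v != f2 -> rk u = rk v -> u = v.
Proof.
move=> h1 h2 h3 h4 h5 h6.
pose A := [set v : 'I_m.+4.+1 | (v != c) && (v != f1) && (v != f2)].
have HA : #|A| = m.+2.
  have -> : A = ~: [set c; f1; f2].
    by apply/setP => v; rewrite !inE !negb_or.
  have := cardsC [set c; f1; f2]; rewrite card_ord setUC cardsU1 cards2 !inE.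
  rewrite (eq_sym f2 c) (eq_sym f2 f1) (negbTE h2) (negbTE h3) h1 /= => H.
  by apply/eqP; rewrite -(eqn_add2l 3) H.
have x0A : x0 \in A by rewrite !inE h4 h5 h6.
exists (fun v => cast_ord HA (enum_rank_in x0A v)).
move=> u v u1 u2 u3 v1 v2 v3 /(congr1 val) /= /val_inj.
by apply: enum_rank_in_inj; rewrite !inE ?u1 ?u2 ?u3 ?v1 ?v2 ?v3.
Qed.

Ltac crush :=
  repeat match goal with
  | |- context [?u == ?v] => is_var u; is_var v;
      let E := fresh "E" in case: (eqVneq u v) => E; [subst|]; cbv beta iota
  end;
  try match goal with H : is_true (?x != ?x) |- _ => by rewrite eqxx in H end;
  intros; simpl in *; try discriminate; try done; try subst;
  try match goal with H : is_true (?x != ?x) |- _ => by rewrite eqxx in H end.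

Lemma disj_case m k (e : rel 'I_m.+4.+1) (c a b x y : 'I_m.+4.+1) :
  (forall u v, e u v -> e v u) -> (forall u, u != c -> e u c) -> e b a -> e y x ->
  c != a -> c != b -> c != x -> c != y -> a != b -> a != x -> a != y ->
  b != x -> b != y -> x != y ->
  px_le e k m.+2.
Proof.
move=> es ec eba eyx ca cb cx cy ab ax ay bx biy xy.
have ac : a != c by rewrite eq_sym.
have [rk rkinj] := @rank_ex m c b y a cb cy biy ac ab ay.
pose p v := if v == b then a else if v == y then x else c.
pose d v := if v == c then 0 else if (v == b) || (v == y) then 2 else 1.
pose g v := if v == b then flip (rk a) else if v == y then flip (rk x) else rk v.
apply: (@gen _ e m.+2 k c p d g) => //.
- by move=> u; rewrite /p; crush; apply: ec.
- by move=> u; rewrite /d /p; crush.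
- move=> u v; rewrite /p /g; crush.
  all: try (apply/eqP => ?); try match goal with H : ?f ?u = ?f ?v, N : is_true (?u != ?v) |- _ =>
     by move: N; rewrite (rkinj u v) // eqxx end.
- move=> u; rewrite /p /g; crush.
  all: try by rewrite flip_neq.
Qed.

Lemma shared_case m k (e : rel 'I_m.+4.+1) (c s o1 o2 : 'I_m.+4.+1) :
  (forall u v, e u v -> e v u) -> (forall u, u != c -> e u c) -> e s o1 -> e o2 s ->
  c != s -> c != o1 -> c != o2 -> s != o1 -> s != o2 -> o1 != o2 ->
  px_le e k m.+2.
Proof.
move=> es ec eso eos cs co1 co2 so1 so2 oo.
have o1c : o1 != c by rewrite eq_sym.
have o1s : o1 != s by rewrite eq_sym.
have [rk rkinj] := @rank_ex m c s o2 o1 cs co2 so2 o1c o1s oo.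
pose p v := if v == s then o1 else if v == o2 then s else c.
pose d v := if v == c then 0 else if v == s then 2 else if v == o2 then 3 else 1.
pose g v := if v == s then flip (rk o1) else if v == o2 then flip (flip (rk o1)) else rk v.
apply: (@gen _ e m.+2 k c p d g) => //.
- by move=> u; rewrite /p; crush; apply: ec.
- by move=> u; rewrite /d /p; crush.
- move=> u v; rewrite /p /g; crush.
  all: try (apply/eqP => ?); try match goal with H : ?f ?u = ?f ?v, N : is_true (?u != ?v) |- _ =>
     by move: N; rewrite (rkinj u v) // eqxx end.
- move=> u; rewrite /p /g; crush.
  all: try by rewrite flip_neq.
Qed.

Lemma add_edge_sym (T : finType) (e : rel T) a b :
  (forall u v, e u v -> e v u) -> forall u v, add_edge e a b u v -> add_edge e a b v u.
Proof.
move=> es u v; rewrite /add_edge => /orP[/es->//|/andP[uv /eqP H]].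
by rewrite eq_sym uv setUC H eqxx orbT.
Qed.

Lemma add_edge_l (T : finType) (e : rel T) a b u v : e u v -> add_edge e a b u v.
Proof. by rewrite /add_edge => ->. Qed.

Lemma add_edge_new (T : finType) (e : rel T) a b : a != b -> add_edge e a b a b.
Proof. by move=> ab; rewrite /add_edge ab eqxx orbT. Qed.

Lemma star_sym n (c : 'I_n) u v : star c u v -> star c v u.
Proof. by rewrite /star eq_sym orbC. Qed.

Theorem mainTheorem15 (n : nat) (c a b x y : 'I_n) (k : nat) :
  5 <= n ->
  a != c -> b != c -> a != b ->
  x != y -> ~~ add_edge (star c) a b x y ->
  3 <= k <= n ->
  px_le (add_edge (add_edge (star c) a b) x y) k (n - 3).
Proof.
move: c a b x y; case: n => [|[|[|[|[|m]]]]] // c a b x y _ ac bc ab xy hxy _.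
suff H : px_le (add_edge (add_edge (star c) a b) x y) k m.+2 by exact H.
set E := add_edge (add_edge (star c) a b) x y.
have s1 : forall u v, add_edge (star c) a b u v -> add_edge (star c) a b v u.
  by apply: add_edge_sym; apply: star_sym.
have es : forall u v, E u v -> E v u by apply: add_edge_sym.
have ec : forall u, u != c -> E u c.
  by move=> u uc; do 2 apply: add_edge_l; rewrite /star uc eqxx orbT.
have eab : E a b by apply: add_edge_l; apply: add_edge_new.
have eba : E b a by apply: es.
have exy : E x y by apply: add_edge_new.
have eyx : E y x by apply: es.
have xc : x != c.
  apply/negP => /eqP xc; move: hxy.
  by rewrite add_edge_l // /star xy xc eqxx.
have yc : y != c.
  apply/negP => /eqP yc; move: hxy.
  by rewrite add_edge_l // /star xy yc eqxx orbT.
have cN : forall z, z != c -> c != z by move=> z; rewrite eq_sym.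
case: (eqVneq x a) => [xa|xa].
  subst x.
  have yb : y != b by apply/negP => /eqP yb; move: hxy; rewrite yb add_edge_new.
  apply: (@shared_case m k E c a b y) => //; try exact: cN; try by rewrite eq_sym.
case: (eqVneq x b) => [xb|xb].
  subst x.
  have ya : y != a by apply/negP => /eqP ya; move: hxy; rewrite ya s1 // add_edge_new.
  apply: (@shared_case m k E c b a y) => //; try exact: cN; try by rewrite eq_sym.
case: (eqVneq y a) => [ya|ya].
  subst y.
  apply: (@shared_case m k E c a b x) => //; try exact: cN; try by rewrite eq_sym.
case: (eqVneq y b) => [yb|yb].
  subst y.
  apply: (@shared_case m k E c b a x) => //; try exact: cN; try by rewrite eq_sym.
apply: (@disj_case m k E c a b x y) => //; try exact: cN; by rewrite eq_sym.
Qed.
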